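(* Let $d\ge1$ and $t\ge1$ be integers, $M\ge1$ a real constant, and $f:[0,1]^d\to\mathbb{R}$ any function. Let $\hat f$ be the neural network produced by the construction described in the context. Then for every $\mathbf{p}\in P=\{(i_1,\dots,i_d)/t: i_r\in\mathbb{Z},\ 0\le i_r\le t\}$, $|f(\mathbf{p})-\hat f(\mathbf{p})|=0$.
   Context: Let $\sigma(z)=\max(z,0)$ and $k=(t+1)^d$. For an integer $0\le i\le k-1$ let $\boldsymbol\pi^i=(\pi^i_1,\dots,\pi^i_d)$ be its base-$(t+1)$ digit vector, i.e. $0\le\pi^i_r\le t$ and $i=\sum_{r=1}^d\pi^i_r(t+1)^{d-r}$; then $\{\boldsymbol\pi^i/t\}_{i=0}^{k-1}=P$. For parameters $a_j,b_{1,j},\dots,b_{d,j}$ define the g-unit $\hat g_j(\mathbf{x})=a_j\,\sigma\big(\sum_{r=1}^d -M\sigma(-x_r+b_{r,j})+\tfrac1t\big)$. Construction: set $b=f(\mathbf{0})$; for $i=1,2,\dots,k-1$ in order: let $\hat y=b+\sum_{j=1}^{i-1}\hat g_j(\boldsymbol\pi^i/t)$ (computed with the already fixed parameters), set $b_{r,i}=\pi^i_r/t$ for $r=1,\dots,d$, and set $a_i=t\big(f(\boldsymbol\pi^i/t)-\hat y\big)$. The output is $\hat f(\mathbf{x})=b+\sum_{i=1}^{k-1}\hat g_i(\mathbf{x})$. *)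

(* Defs.v *)
From mathcomp Require Import all_boot all_order all_algebra.
From mathcomp Require Import reals.
Set Implicit Arguments. Unset Strict Implicit. Unset Printing Implicit Defensive.
Import Order.TTheory GRing.Theory Num.Theory.
Local Open Scope ring_scope.

Section Construction.
Variable R : realType.
Variables (d t : nat) (M : R) (f : ('I_d -> R) -> R).

Definition relu (z : R) : R := Num.max z 0.

Definition kpts : nat := (t.+1 ^ d)%N.

(* base-(t+1) digit pi^i_r, with r : 'I_d 0-indexed (paper's r = r0+1),
   so pi^i_{r0+1} = (i / (t+1)^(d-1-r0)) mod (t+1) *)
Definition digit (i : nat) (r : 'I_d) : nat :=
  ((i %/ (t.+1 ^ (d - r.+1))) %% t.+1)%N.

Definition gridpt (i : nat) : 'I_d -> R := fun r => (digit i r)%:R / t%:R.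

Definition gunit (a : R) (b : 'I_d -> R) (x : 'I_d -> R) : R :=
  a * relu (\sum_(r < d) (- M * relu (- x r + b r)) + t%:R^-1).

Definition bias : R := f (fun _ => 0).

(* the j-th unit (j >= 1) given the list as of coefficients a_1, a_2, ...
   (a_j = nth 0 as (j-1)); b_{r,j} = pi^j_r / t *)
Definition unit_j (as_ : seq R) (j : nat) (x : 'I_d -> R) : R :=
  gunit (nth 0 as_ j.-1) (gridpt j) x.

Fixpoint coeffs (n : nat) : seq R :=
  match n with
  | 0 => [::]
  | n'.+1 =>
      let as_ := coeffs n' in
      let i := n'.+1 in
      let yhat := bias + \sum_(1 <= j < i) unit_j as_ j (gridpt i) in
      rcons as_ (t%:R * (f (gridpt i) - yhat))
  end.

Definition fhat (x : 'I_d -> R) : R :=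
  bias + \sum_(1 <= i < kpts) unit_j (coeffs kpts.-1) i x.

End Construction.

Definition in_grid (R : realType) (d t : nat) (p : 'I_d -> R) : Prop :=
  exists idx : 'I_d -> nat,
    (forall r, (idx r <= t)%N) /\ (forall r, p r = (idx r)%:R / t%:R).

(* Main.v *)
Require Import Defs.
From mathcomp Require Import all_boot all_order all_algebra.
From mathcomp Require Import reals zify.
Import Order.TTheory GRing.Theory Num.Theory.

Lemma modnM_split b m i : 0 < b -> 0 < m ->
  i %% (b * m) = i %% b + b * (i %/ b %% m).
Proof.
move=> b0 m0.
have h1 := divn_eq i b; have h2 := divn_eq (i %/ b) m.
have l1 := ltn_pmod i b0; have l2 := ltn_pmod (i %/ b) m0.
have E : i = (i %/ b %/ m) * (b * m) + (i %% b + b * (i %/ b %% m)).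
  rewrite {1}h1 {1}h2; nia.
rewrite {1}E modnMDl modn_small //.
have : b * (i %/ b %% m) + b <= b * m.
  by rewrite -mulnSr leq_mul2l l2 orbT.
lia.
Qed.

Lemma expand_mod b n i : 0 < b ->
  \sum_(s < n) (i %/ b ^ s %% b) * b ^ s = i %% b ^ n.
Proof.
move=> b0; elim: n i => [|n IH] i; first by rewrite big_ord0 expn0 modn1.
rewrite big_ord_recl expn0 divn1 muln1.
under eq_bigr => s _ do rewrite /bump /= expnS divnMA mulnCA.
rewrite -big_distrr /= IH expnS modnM_split // expn_gt0 b0 //.
Qed.
From mathcomp Require Import ring lra.
From Stdlib Require Import FunctionalExtensionality.

Lemma digit_expand d t i : i < t.+1 ^ d ->
  i = \sum_(r < d) digit t i r * t.+1 ^ (d - r.+1).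
Proof.
move=> hi.
have := @expand_mod t.+1 d i (ltn0Sn t).
rewrite (reindex_inj rev_ord_inj) /= modn_small // => <-.

Qed.

Lemma digit_mono d t i j : i < t.+1 ^ d -> j < t.+1 ^ d ->
  (forall r : 'I_d, digit t j r <= digit t i r) -> j <= i.
Proof.
move=> hi hj H; rewrite (@digit_expand d t i hi) (@digit_expand d t j hj).
by apply: leq_sum => r _; rewrite leq_mul2r H orbT.
Qed.

Lemma digit0 d t (r : 'I_d) : digit t 0 r = 0.
Proof. by rewrite /digit div0n mod0n. Qed.

Local Open Scope ring_scope.

Lemma unit_eval (R : realType) d t (M : R) a i j :
  1 <= M -> (1 <= t)%N ->
  gunit t M a (gridpt R t j) (gridpt R t i : 'I_d -> R) =
  if [forall r : 'I_d, (digit t j r <= digit t i r)%N] then a / t%:R else 0.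
Proof.
move=> hM ht.
have tp : 0 < t%:R :> R by rewrite ltr0n.
have tip : 0 < t%:R^-1 :> R by rewrite invr_gt0.
rewrite /gunit; case: ifP => [/forallP H | /negbT].
  rewrite big1 ?add0r; last first.
    move=> r _; rewrite /relu max_r ?mulr0 // /gridpt.
    have := H r; rewrite -(ler_nat R) => h.
    rewrite -mulNr -mulrDl.
    apply: mulr_le0_ge0; [lra | exact: ltW tip].
  by rewrite /relu max_l ?ltW // mulrC.
rewrite negb_forall => /existsP [r0]; rewrite -ltnNge => hr0.
suff -> : relu (\sum_(r < d) - M * relu (- gridpt R t i r + gridpt R t j r) + t%:R^-1) = 0 by rewrite mulr0.
rewrite /relu max_r //.
rewrite (bigD1 r0) //=.
have hrest : \sum_(r < d | r != r0) - M * relu (- gridpt R t i r + gridpt R t j r) <= 0.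
  apply: sumr_le0 => r _; rewrite mulNr oppr_le0 mulr_ge0 //; first by lra.
  by rewrite /relu le_max lexx orbT.
set x := - gridpt R t i r0 + gridpt R t j r0.
have hx : t%:R^-1 <= x.
  rewrite /x /gridpt -mulNr -mulrDl.
  have : 1 <= (digit t j r0)%:R - (digit t i r0)%:R :> R.
    by rewrite lerBrDr -(natrD R 1) ler_nat add1n.
  move=> h; nra.
have h1 : x <= relu x by rewrite /relu le_max lexx.
have h2 : 0 <= relu x by rewrite /relu le_max lexx orbT.
rewrite /relu in h1 h2 *.
nra.
Qed.

Lemma size_coeffs (R : realType) d t (M : R) (f : ('I_d -> R) -> R) n :
  size (coeffs t M f n) = n.
Proof. by elim: n => //= n IH; rewrite size_rcons IH. Qed.

Lemma nth_coeffs (R : realType) d t (M : R) (f : ('I_d -> R) -> R) n m j :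
  (m <= n)%N -> (j < m)%N -> nth 0 (coeffs t M f n) j = nth 0 (coeffs t M f m) j.
Proof.
elim: n => [|n IH] hm hj; first by move: hm; rewrite leqn0 => /eqP ->.
case: (ltngtP m n.+1) hm => // [hlt|->] _ //.
rewrite /= nth_rcons size_coeffs.
have -> : (j < n)%N by lia.
by apply: IH; lia.
Qed.

Definition Acoef (R : realType) d t (M : R) (f : ('I_d -> R) -> R) i :=
  nth 0 (coeffs t M f i) i.-1.
Arguments Acoef {R d} t M f i.

Lemma Acoef_def (R : realType) d t (M : R) (f : ('I_d -> R) -> R) i : (1 <= i)%N ->
  Acoef t M f i = t%:R * (f (gridpt R t i) -
     (bias f + \sum_(1 <= j < i) unit_j t M (coeffs t M f i.-1) j (gridpt R t i : 'I_d -> R))).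
Proof.
case: i => // n _.
by rewrite /Acoef /= nth_rcons size_coeffs ltnn eqxx.
Qed.

Lemma unit_coeffs (R : realType) d t (M : R) (f : ('I_d -> R) -> R) n j (x : 'I_d -> R) :
  (1 <= j)%N -> (j <= n)%N ->
  unit_j t M (coeffs t M f n) j x = gunit t M (Acoef t M f j) (gridpt R t j) x.
Proof.
move=> h1 h2; rewrite /unit_j /Acoef (@nth_coeffs R d t M f n j) //; lia.
Qed.

Lemma gridpt0 (R : realType) d t : (gridpt R t 0 : 'I_d -> R) = (fun _ => 0).
Proof. by apply: functional_extensionality => r; rewrite /gridpt digit0 mul0r. Qed.

Lemma fhat_grid (R : realType) d t (M : R) (f : ('I_d -> R) -> R) i :
  1 <= M -> (1 <= t)%N -> (i < kpts d t)%N ->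
  fhat t M f (gridpt R t i) = f (gridpt R t i).
Proof.
move=> hM ht hi; rewrite /fhat.
have tn0 : t%:R != 0 :> R by rewrite pnatr_eq0 -lt0n.
have kpos : (0 < kpts d t)%N by lia.
have zero : forall m : nat, (i <= m)%N ->
   \sum_(m.+1 <= j < kpts d t) unit_j t M (coeffs t M f (kpts d t).-1) j (gridpt R t i : 'I_d -> R) = 0.
  move=> m hm; rewrite big_nat_cond big1 // => j /andP[/andP[h1 h2] _].
  rewrite unit_coeffs; [|lia|lia].
  rewrite unit_eval //; case: ifP => // /forallP H; exfalso.
  have := @digit_mono d t i j hi h2 H; lia.
case: i hi zero => [|i] hi zero.
  by rewrite (zero 0%N) // addr0 gridpt0.
rewrite (@big_cat_nat _ _ _ i.+2) //= ?(zero i.+1) // addr0.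
rewrite big_nat_recr //=.
rewrite (@unit_coeffs R d t M f) //; last by lia.
rewrite unit_eval //.
have -> : [forall r : 'I_d, (digit t i.+1 r <= digit t i.+1 r)%N] by apply/forallP.
rewrite Acoef_def //=.
have -> : \sum_(1 <= j < i.+1) unit_j t M (coeffs t M f (kpts d t).-1) j (gridpt R t i.+1 : 'I_d -> R)
  = \sum_(1 <= j < i.+1) unit_j t M (coeffs t M f i) j (gridpt R t i.+1 : 'I_d -> R).
  apply: eq_big_nat => j /andP[h1 h2].
  rewrite (@unit_coeffs R d t M f (kpts d t).-1) ?(@unit_coeffs R d t M f i) //; lia.
by field.
Qed.

Lemma grid_index (R : realType) d t (p : 'I_d -> R) : in_grid t p ->
  exists2 i, (i < kpts d t)%N & p = gridpt R t i.
Proof.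
case=> idx [hidx hp].
pose F := fun i : 'I_(t.+1 ^ d) =>
  [ffun r : 'I_d => (Ordinal (ltn_pmod (i %/ t.+1 ^ (d - r.+1)) (ltn0Sn t)))].
have Finj : injective F.
  move=> i1 i2 E; apply: val_inj => /=.
  rewrite (@digit_expand d t i1) // (@digit_expand d t i2) //.
  apply: eq_bigr => r _; congr (_ * _).
  have := congr1 (fun g : {ffun 'I_d -> 'I_t.+1} => val (g r)) E.
  by rewrite /F !ffunE.
pose g : {ffun 'I_d -> 'I_t.+1} := [ffun r => inord (idx r)].
have : g \in codom F.
  apply: inj_card_onto => //.
  by rewrite card_ffun !card_ord.
case/codomP => i gE.
exists (val i); first exact: ltn_ord i.
apply: functional_extensionality => r; rewrite hp /gridpt.
have := congr1 (fun g : {ffun 'I_d -> 'I_t.+1} => val (g r)) gE.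
rewrite /F /g !ffunE /= inordK ?ltnS ?hidx // => ->.
by [].
Qed.

Theorem lemmaA1 (R : realType) (d t : nat) (M : R) (f : ('I_d -> R) -> R) :
  (1 <= d)%N -> (1 <= t)%N -> 1 <= M ->
  forall p : 'I_d -> R, in_grid t p ->
    `| f p - fhat t M f p | = 0.
Proof.
move=> hd ht hM p /grid_index [i hi ->].
by rewrite fhat_grid // subrr normr0.
Qed.
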